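(* Let $R$ be an Artinian ring, with notation as in the context. Let $f_1,f_2\colon[R^n]\to[R^m]$ be $\mathrm{OVIC}(R)$-morphisms, $f_i=(f_i',f_i'')$. Assume that $f_1''=f_2''$ and that the free rows of $\Phi(f_1')$ and of $\Phi(f_2')$ are equal. Then $f_1=f_2$.
   Context: Let $R$ be an Artinian ring, $J(R)$ its Jacobson radical, $\overline R=R/J(R)$, and $\bar x$ (resp. $\bar A$) the image of an element (resp. entrywise image of a matrix). $\overline R\cong \mathrm{Mat}_{\mu_1}(\mathbb D_1)\times\cdots\times\mathrm{Mat}_{\mu_q}(\mathbb D_q)$ with division rings $\mathbb D_k$; put $\mu=\mu_1+\cdots+\mu_q$. Fix orthogonal idempotents $e^k_i\in R$ ($1\le k\le q$, $1\le i\le\mu_k$) with $\sum_{k,i}e^k_i=1$ lifting the orthogonal idempotents $\bar e^k_i$ of $\overline R$ given by the diagonal matrix units of this decomposition (so $e^k_iR\cong e^{k'}_{i'}R$ iff $k=k'$). Let $\mathbb L_{hk}=e^h_1Re^k_1$. The Peirce decomposition $R\cong\mathrm{End}(R_R)=\bigoplus\mathrm{Hom}(e^k_jR,e^h_iR)$, with the isomorphisms $e^h_iR\cong e^h_1R$, gives an injective ring homomorphism (the Artin–Wedderburn embedding) $\Phi\colon R\to\mathrm{Mat}_\mu(R)$, $x\mapsto(\Phi_{hk}(x))_{h,k=1}^q$ a $q\times q$ block matrix with $\Phi_{hk}(x)\in\mathrm{Mat}_{\mu_h,\mu_k}(\mathbb L_{hk})$; its reduction $\overline\Phi\colon\overline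 R\to\mathrm{Mat}_\mu(\overline R)$ sends $\bar x$ to the block-diagonal matrix whose $k$-th block is the $\mathrm{Mat}_{\mu_k}(\mathbb D_k)$-component of $\bar x$. Vectors $R^n$ are columns (right $R$-modules); an $R$-linear $h\colon R^a\to R^b$ is a $b\times a$ matrix, and $\Phi(h)\in\mathrm{Mat}_{\mu b,\mu a}(R)$ is obtained by replacing each entry $x$ by $\Phi(x)$; similarly $\overline\Phi(\bar h)$. Distinguished basis: for $1\le k\le q$, $1\le c\le a$, $1\le r\le\mu_k$, let $\vec v(k)_{(c-1)\mu_k+r}$ be the standard basis vector of $R^{\mu a}$ of index $(c-1)\mu+\mu_1+\cdots+\mu_{k-1}+r$; define $\vec w(k)_i$ in $R^{\mu b}$ the same way, bars denoting images over $\overline R$. For surjective $h\colon R^a\to R^b$ and each $k$, $\mathfrak S(h,k)$ is the smallest, in the lexicographic order on increasingly sorted sequences, subset $S\subset\{1,\dots,\mu_ka\}$ such that $\{\overline\Phi(\bar h)(\overline{\vec v(k)_j}):j\in S\}$ is a basis of the right $\mathbb D_k$-module $\bigoplus_{i=1}^{\mu_kb}\overline{\vec w(k)_i}\cdot\mathbb D_k$. A surjective $h$ is column-adapted if (i) for every $k$, writing $\mathfrak S(h,k)=\{j_1<\cdots<j_{\mu_kb}\}$, $\overline\Phi(\bar h)(\overline{\vec v(k)_{j_i}})=\overline{\vec w(k)_i}$ for all $i$, and (ii) $\Phi(h)(\vec v(k)_{j_i})=\vec w(k)_i$ for all $k,i$. $\mathrm{VIC}(R)$ has objects $[R^n]$,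 $n\ge0$; a morphism $[R^n]\to[R^m]$ is a pair $(f',f'')$ with $f'\colon R^n\to R^m$ injective $R$-linear, $f''\colon R^m\to R^n$ $R$-linear, $f''\circ f'=\mathrm{id}$; composition $(g',g'')\circ(f',f'')=(g'f',f''g'')$. $\mathrm{OVIC}(R)$ is the subcategory with the same objects and morphisms those $(f',f'')$ with $f''$ column-adapted. For an $\mathrm{OVIC}(R)$-morphism $(f',f'')\colon[R^n]\to[R^m]$, the rows of $\Phi(f')\in\mathrm{Mat}_{\mu m,\mu n}(R)$ are indexed by the standard basis of $R^{\mu m}$; the dependent rows are those indexed by $\vec v(k)_j$ (distinguished basis of $R^{\mu m}$) with $j\in\mathfrak S(f'',k)$ for some $k$, and all other rows are the free rows. *)

(* Defs.v *)
From HB Require Import structures.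
From mathcomp Require Import all_boot all_order all_algebra.
Unset Printing Implicit Defensive.
Import GRing.Theory.
Local Open Scope ring_scope.

Definition right_ideal {R : pzRingType} (I : R -> Prop) : Prop :=
  [/\ I 0, (forall x y, I x -> I y -> I (x + y)), (forall x, I x -> I (- x))
    & (forall x r, I x -> I (x * r))].

Definition left_ideal {R : pzRingType} (I : R -> Prop) : Prop :=
  [/\ I 0, (forall x y, I x -> I y -> I (x + y)), (forall x, I x -> I (- x))
    & (forall x r, I x -> I (r * x))].

Definition dcc {R : pzRingType} (ideal : (R -> Prop) -> Prop) : Prop :=
  forall I : nat -> R -> Prop,
    (forall n, ideal (I n)) -> (forall n x, I n.+1 x -> I n x) ->
    exists N, forall n, (N <= n)%N -> forall x, I N x -> I n x.

Definition artinian (R : pzRingType) : Prop :=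
  dcc (@right_ideal R) /\ dcc (@left_ideal R).

Definition maximal_right_ideal {R : pzRingType} (I : R -> Prop) : Prop :=
  [/\ right_ideal I, ~ I 1 &
      forall I' : R -> Prop, right_ideal I' -> (forall x, I x -> I' x) ->
        ~ I' 1 -> forall x, I' x -> I x].

Definition jacobson {R : pzRingType} (x : R) : Prop :=
  forall I : R -> Prop, maximal_right_ideal I -> I x.

Definition division_ring (D : nzRingType) : Prop :=
  forall d : D, d != 0 -> exists d' : D, d * d' = 1 /\ d' * d = 1.

(*   q factors; the k-th factor of R/J(R) is Mat_{mu_k}(D_k) with      *)
(*   mu_k = (mu k).+1 (positivity built in, index 0 = "index 1" of the *)
(*   paper).  pi k : R -> Mat_{mu_k}(D_k) is R -> R/J(R) -> k-th factor.*)
(*   e k i = e^k_i, a k i : e^k_iR -> e^k_1R (left mult.), b k i its   *)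
(*   inverse.                                                          *)

Definition AW_data {R : pzRingType} {q : nat} {mu : 'I_q -> nat}
    {D : 'I_q -> nzRingType}
    (pi : forall k : 'I_q, {rmorphism R -> 'M[D k]_((mu k).+1)})
    (e a b : forall k : 'I_q, 'I_((mu k).+1) -> R) : Prop :=
  [/\
      forall k, division_ring (D k),
      (* R/J(R) ~= prod_k Mat_{mu_k}(D_k) via the pi k *)
      (forall y : forall k : 'I_q, 'M[D k]_((mu k).+1),
          exists x : R, forall k, pi k x = y k),
      (forall x : R, (forall k, pi k x = 0) <-> jacobson x),
      [/\ forall k i, e k i * e k i = e k i,
          forall k l (i : 'I_((mu k).+1)) (j : 'I_((mu l).+1)),
            (k != l) || (val i != val j) -> e k i * e l j = 0
        & \sum_(k < q) \sum_(i < (mu k).+1) e k i = 1] &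
      [/\ (forall k i, pi k (e k i) = delta_mx i i),
          (forall k l i, l != k -> pi l (e k i) = 0) &
      (* isomorphisms e^k_i R ~= e^k_1 R, compatible with matrix units *)
      forall k i,
        [/\ a k i = e k ord0 * a k i * e k i,
            b k i = e k i * b k i * e k ord0,
            a k i * b k i = e k ord0,
            b k i * a k i = e k i
          & pi k (a k i) = delta_mx ord0 i /\ pi k (b k i) = delta_mx i ord0]]].

Section Phi.
Context {R : pzRingType} {q : nat} {mu : 'I_q -> nat}.
Implicit Types (a b : forall k : 'I_q, 'I_((mu k).+1) -> R).

Definition mutot := (\sum_(k < q) (mu k).+1)%N.

(* Phi(x) : block (h,k) has entries a^h_i x b^k_j in L_hk = e^h_1 R e^k_1 *)
Definition PhiR a b (x : R) : 'M[R]_(\sum_(k < q) (mu k).+1) :=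
  \mxblock_(h < q, k < q) (\matrix_(i < (mu h).+1, j < (mu k).+1) (a h i * x * b k j)).

Definition PhiM a b {r c : nat} (h : 'M[R]_(r, c)) :
    'M[R]_(\sum_(i < r) mutot, \sum_(j < c) mutot) :=
  \mxblock_(i < r, j < c) PhiR a b (h i j).

(* distinguished basis of R^{mu c}: the vector vec(k)_{(c'-1)mu_k + r'} is the
   standard basis vector of index (c'-1)mu + mu_1+...+mu_{k-1} + r'.  We index it
   by the pair (c', r'); its position in the distinguished family is
   dpos k (c', r') = c' * mu_k + r' (0-based). *)
Definition didx {c : nat} (k : 'I_q) (j : 'I_c * 'I_((mu k).+1)) :
    'I_(\sum_(i < c) mutot) :=
  @tagnat.Rank c (fun _ => mutot) j.1 (@tagnat.Rank q (fun k => (mu k).+1) k j.2).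

Definition dpos {c : nat} (k : 'I_q) (j : 'I_c * 'I_((mu k).+1)) : nat :=
  (val j.1 * (mu k).+1 + val j.2)%N.

End Phi.

Fixpoint lexle (s t : seq nat) : bool :=
  match s, t with
  | [::], _ => true
  | _ :: _, [::] => false
  | x :: s', y :: t' => (x < y)%N || ((x == y) && lexle s' t')
  end.

Section Frak.
Context {R : pzRingType} {q : nat} {mu : 'I_q -> nat} {D : 'I_q -> nzRingType}
  (pi : forall k : 'I_q, {rmorphism R -> 'M[D k]_((mu k).+1)})
  (e a b : forall k : 'I_q, 'I_((mu k).+1) -> R).

(* Entry of bar Phi(bar h) at (w(k)_i, v(k)_j), read in D_k: the entry lies in
   the corner bar e^k_1 bar R bar e^k_1, identified with D_k via pi k (.) 0 0. *)
Definition dcoord {r c : nat} (h : 'M[R]_(r, c)) (k : 'I_q)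
    (i : 'I_r * 'I_((mu k).+1)) (j : 'I_c * 'I_((mu k).+1)) : D k :=
  (pi k (PhiM a b h (didx k i) (didx k j))) ord0 ord0.

(* {bar Phi(bar h)(bar v(k)_j) : j in S} is a basis of the right D_k-module
   (+)_i bar w(k)_i . D_k *)
Definition basis_sel {r c : nat} (h : 'M[R]_(r, c)) (k : 'I_q)
    (S : {set 'I_c * 'I_((mu k).+1)}) : Prop :=
  (forall d : 'I_c * 'I_((mu k).+1) -> D k,
      (forall j, j \notin S -> d j = 0) ->
      (forall i, \sum_j dcoord h k i j * d j = 0) -> forall j, d j = 0) /\
  (forall y : 'I_r * 'I_((mu k).+1) -> D k,
      exists d : 'I_c * 'I_((mu k).+1) -> D k,
        (forall j, j \notin S -> d j = 0) /\
        (forall i, \sum_j dcoord h k i j * d j = y i)).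

Definition sorted_pos {c : nat} (k : 'I_q) (S : {set 'I_c * 'I_((mu k).+1)}) :
    seq nat :=
  sort leq [seq dpos k j | j <- enum S].

Definition frakS {r c : nat} (h : 'M[R]_(r, c)) (k : 'I_q)
    (S : {set 'I_c * 'I_((mu k).+1)}) : Prop :=
  basis_sel h k S /\
  forall S', basis_sel h k S' -> lexle (sorted_pos k S) (sorted_pos k S').

Definition surjective_map {r c : nat} (h : 'M[R]_(r, c)) : Prop :=
  forall y : 'cV[R]_r, exists x : 'cV[R]_c, h *m x = y.

(* column-adapted: for j = j_i the i-th element of frak S(h,k) (i.e. the
   element at position i of sorted_pos), (i) bar Phi(bar h) v(k)_{j_i} = bar w(k)_i
   and (ii) Phi(h) v(k)_{j_i} = w(k)_i.  Inside Phi(R), whose entries in block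
   (k,k) lie in L_kk = e^k_1 R e^k_1, the unit entry of w(k)_i is the identity
   e^k_1 of L_kk. *)
Definition column_adapted {r c : nat} (h : 'M[R]_(r, c)) : Prop :=
  surjective_map h /\
  forall k : 'I_q, exists S : {set 'I_c * 'I_((mu k).+1)},
    frakS h k S /\
    forall j, j \in S ->
      exists i : 'I_r * 'I_((mu k).+1),
        [/\ index (dpos k j) (sorted_pos k S) = dpos k i,
            (forall rho, jacobson (PhiM a b h rho (didx k j) -
                                   (if rho == didx k i then e k ord0 else 0)))
          & (forall rho, PhiM a b h rho (didx k j) =
                         (if rho == didx k i then e k ord0 else 0))].

Definition VIC_morphism {n m : nat} (f' : 'M[R]_(m, n)) (f'' : 'M[R]_(n, m)) : Prop :=
  injective (fun x : 'cV[R]_n => f' *m x) /\ f'' *m f' = 1%:M.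

Definition OVIC_morphism {n m : nat} (f' : 'M[R]_(m, n)) (f'' : 'M[R]_(n, m)) : Prop :=
  VIC_morphism f' f'' /\ column_adapted f''.

(* dependent rows of Phi(f') (rows indexed by the standard basis of R^{mu m}) *)
Definition dependent_row {n m : nat} (f'' : 'M[R]_(n, m))
    (rho : 'I_(\sum_(i < m) mutot)) : Prop :=
  exists (k : 'I_q) (S : {set 'I_m * 'I_((mu k).+1)}) (j : 'I_m * 'I_((mu k).+1)),
    [/\ frakS f'' k S, j \in S & rho = didx k j].

Definition free_row {n m : nat} (f'' : 'M[R]_(n, m))
    (rho : 'I_(\sum_(i < m) mutot)) : Prop := ~ dependent_row f'' rho.

End Frak.

(* Main.v *)
Require Import Defs.
From HB Require Import structures.
From mathcomp Require Import all_boot all_order all_algebra.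
From Stdlib Require Import Classical.
Import GRing.Theory.
Local Open Scope ring_scope.

Lemma mxblock_RankE {T : Type} {p q : nat} {p_ : 'I_p -> nat} {q_ : 'I_q -> nat}
  (B_ : forall (x : 'I_p) (y : 'I_q), 'M[T]_(p_ x, q_ y)) i k (j : 'I_(p_ i)) (l : 'I_(q_ k)) :
  (mxblock B_) (tagnat.Rank i j) (tagnat.Rank k l) = B_ i k j l.
Proof. by have /matrixP/(_ j l) := mxblockK B_ i k; rewrite mxE. Qed.

Lemma mxblockE' {T : Type} {p q : nat} {p_ : 'I_p -> nat} {q_ : 'I_q -> nat}
  (B_ : forall (x : 'I_p) (y : 'I_q), 'M[T]_(p_ x, q_ y)) s t :
  (mxblock B_) s t = B_ (tagnat.sig1 s) (tagnat.sig1 t) (tagnat.sig2 s) (tagnat.sig2 t).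
Proof. by rewrite mxE. Qed.

Lemma lexle_antisym s t : lexle s t -> lexle t s -> s = t.
Proof.
elim: s t => [|x s IH] [|y t] //=.
case: ltngtP => //= [<-].
by move=> /IH H /H ->.
Qed.

Section Phi.
Variables (R : pzRingType) (q : nat) (mu : 'I_q -> nat).
Variables (e a b : forall k : 'I_q, 'I_((mu k).+1) -> R).
Hypothesis esum : \sum_(k < q) \sum_(i < (mu k).+1) e k i = 1.
Hypothesis ba : forall k i, b k i * a k i = e k i.

Lemma one_split (x y : R) :
  x * y = \sum_(k < q) \sum_(i < (mu k).+1) (x * b k i) * (a k i * y).
Proof.
rewrite -{1}[x]mulr1 -esum mulr_sumr mulr_suml; apply: eq_bigr => k _.
rewrite mulr_sumr mulr_suml; apply: eq_bigr => i _.
by rewrite -ba !mulrA.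
Qed.

Lemma PhiR_mul (x y : R) :
  PhiR a b (x * y) = PhiR a b x *m PhiR a b y.
Proof.
rewrite /PhiR mul_mxblock; apply: eq_mxblock => h k.
apply/matrixP => i j; rewrite !mxE summxE.
rewrite -!mulrA mulrA (one_split (a h i * x) (y * b k j)); apply: eq_bigr => l _.
rewrite mxE; apply: eq_bigr => t _; rewrite !mxE.
by rewrite !mulrA.
Qed.

Lemma PhiR_sum (I : finType) (F : I -> R) :
  PhiR a b (\sum_i F i) = \sum_i PhiR a b (F i).
Proof.
apply/matrixP => s t; rewrite summxE !mxE mulr_sumr mulr_suml.
by apply: eq_bigr => i _; rewrite !mxE.
Qed.

Lemma PhiM_mul {r c d : nat} (A : 'M[R]_(r, c)) (B : 'M[R]_(c, d)) :
  PhiM a b (A *m B) = PhiM a b A *m PhiM a b B.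
Proof.
rewrite /PhiM mul_mxblock; apply: eq_mxblock => i j.
by rewrite mxE PhiR_sum; apply: eq_bigr => l _; rewrite PhiR_mul.
Qed.

Lemma recon (x : R) : x = \sum_(h < q) \sum_(i < (mu h).+1) \sum_(k < q) \sum_(j < (mu k).+1)
   b h i * (a h i * x * b k j) * a k j.
Proof.
transitivity ((\sum_(k < q) \sum_(i < (mu k).+1) e k i) * x * (\sum_(k < q) \sum_(i < (mu k).+1) e k i)); first by rewrite esum mulr1 mul1r.
rewrite -mulrA mulr_suml; apply: eq_bigr => h _.
rewrite mulr_suml; apply: eq_bigr => i _.
rewrite mulr_sumr mulr_sumr; apply: eq_bigr => k _.
rewrite mulr_sumr mulr_sumr; apply: eq_bigr => j _.
by rewrite -!ba !mulrA.
Qed.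

Lemma PhiR_Rank (x : R) h i k j :
  PhiR a b x (tagnat.Rank h i) (tagnat.Rank k j) = a h i * x * b k j.
Proof. by rewrite /PhiR (mxblock_RankE _ h k i j) mxE. Qed.

Lemma PhiM_didx {r c : nat} (A : 'M[R]_(r, c)) h (si : 'I_r * 'I_((mu h).+1)) k (tj : 'I_c * 'I_((mu k).+1)) :
  PhiM a b A (didx h si) (didx k tj) = a h si.2 * A si.1 tj.1 * b k tj.2.
Proof.
rewrite /PhiM /didx.
rewrite (mxblock_RankE (fun i0 j0 => PhiR a b (A i0 j0)) si.1 tj.1).
exact: PhiR_Rank.
Qed.

Lemma PhiM_inj {r c : nat} (A B : 'M[R]_(r, c)) : PhiM a b A = PhiM a b B -> A = B.
Proof.
move=> E; apply/matrixP => s t.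
rewrite (recon (A s t)) (recon (B s t)).
apply: eq_bigr => h _; apply: eq_bigr => i _; apply: eq_bigr => k _; apply: eq_bigr => j _.
have /matrixP/(_ (didx h (s, i)) (didx k (t, j))) := E.
by rewrite !PhiM_didx => ->.
Qed.

End Phi.

Lemma dpos_inj {q : nat} {mu : 'I_q -> nat} {c : nat} (k : 'I_q) :
  injective (@dpos q mu c k).
Proof.
move=> [x1 x2] [y1 y2]; rewrite /dpos /= => E.
have M0 : (0 < (mu k).+1)%N by [].
have e2 : val x2 = val y2.
  by have := congr1 (fun z => z %% (mu k).+1)%N E; rewrite /= !modnMDl !modn_small.
have e1 : val x1 = val y1.
  have := congr1 (fun z => z %/ (mu k).+1)%N E; rewrite /= !divnMDl // !divn_small //.
  by rewrite !addn0.
by congr pair; apply: val_inj.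
Qed.

Lemma frakS_uniq {R : pzRingType} {q : nat} {mu : 'I_q -> nat} {D : 'I_q -> nzRingType}
  (pi : forall k : 'I_q, {rmorphism R -> 'M[D k]_((mu k).+1)})
  {a b : forall k : 'I_q, 'I_((mu k).+1) -> R} {r c} {h : 'M[R]_(r, c)} {k S S'} :
  frakS pi a b h k S -> frakS pi a b h k S' -> S = S'.
Proof.
case=> bS minS [bS' minS'].
have E := lexle_antisym _ _ (minS _ bS') (minS' _ bS).
apply/setP => x.
have : (dpos k x \in sorted_pos k S) = (dpos k x \in sorted_pos k S') by rewrite E.
by rewrite /sorted_pos !mem_sort !(mem_map (dpos_inj k)) !mem_enum.
Qed.

Arguments frakS_uniq {R q mu D} pi {a b r c h k S S'}.

Lemma didx_surj {q : nat} {mu : 'I_q -> nat} {c : nat} (s : 'I_(\sum_(i < c) @mutot q mu)) :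
  exists k (tj : 'I_c * 'I_((mu k).+1)), s = didx k tj.
Proof.
exists (tagnat.sig1 (tagnat.sig2 s)), (tagnat.sig1 s, tagnat.sig2 (tagnat.sig2 s)).
by rewrite /didx /= !tagnat.sig2K.
Qed.

Lemma didx_eq {q : nat} {mu : 'I_q -> nat} {c : nat} k k' (i : 'I_c * 'I_((mu k).+1)) (i' : 'I_c * 'I_((mu k').+1)) :
  didx k i = didx k' i' -> k = k' /\ (dpos k i = dpos k' i').
Proof.
move=> E.
have /eqP := congr1 val E; rewrite /didx tagnat.eq_Rank => /andP [/eqP e1].
rewrite tagnat.eq_Rank => /andP [/eqP ek /eqP e2].
split => //; subst k'; rewrite /dpos e1; congr addn; exact: e2.
Qed.

Lemma mxBE {R : pzRingType} {r c} (A B : 'M[R]_(r, c)) i j : (A - B) i j = A i j - B i j.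
Proof. by rewrite !mxE. Qed.
Lemma mx0E {R : pzRingType} {r c} i j : (0 : 'M[R]_(r, c)) i j = 0.
Proof. by rewrite !mxE. Qed.
Lemma mulmxE' {R : pzRingType} {r c d} (A : 'M[R]_(r, c)) (B : 'M[R]_(c, d)) i j :
  (A *m B) i j = \sum_k A i k * B k j.
Proof. by rewrite !mxE. Qed.

Theorem lemma4p6
  (R : pzRingType) (q : nat) (mu : 'I_q -> nat) (D : 'I_q -> nzRingType)
  (pi : forall k : 'I_q, {rmorphism R -> 'M[D k]_((mu k).+1)})
  (e a b : forall k : 'I_q, 'I_((mu k).+1) -> R) :
  artinian R ->
  AW_data pi e a b ->
  forall (n m : nat) (f1' f2' : 'M[R]_(m, n)) (f1'' f2'' : 'M[R]_(n, m)),
    OVIC_morphism pi e a b f1' f1'' ->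
    OVIC_morphism pi e a b f2' f2'' ->
    f1'' = f2'' ->
    (forall rho : 'I_(\sum_(i < m) @mutot q mu),
        free_row pi a b f1'' rho ->
        row rho (PhiM a b f1') = row rho (PhiM a b f2')) ->
    (f1', f1'') = (f2', f2'').
Proof.
move=> _ [_ _ _ [eidem _ esum] [_ _ abf]] n m f1' f2' f1'' f2''
  [[_ F1] [_ CA]] [[_ F2] _] E12 Hfree.
rewrite -E12 in F2 *.
have ba : forall k i, b k i * a k i = e k i by move=> k i; have [] := abf k i.
have ea : forall k i, e k ord0 * a k i = a k i.
  by move=> k i; have [A _ _ _ _] := abf k i; rewrite A !mulrA eidem.
have Z : PhiM a b f1'' *m (PhiM a b f1' - PhiM a b f2') = 0.
  by rewrite mulmxBr -!(@PhiM_mul R q mu e a b esum ba) F1 F2 subrr.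
have freeE : forall rho sig, ~ dependent_row pi a b f1'' rho ->
    PhiM a b f1' rho sig = PhiM a b f2' rho sig.
  by move=> rho sig /Hfree /rowP /(_ sig); rewrite [LHS]mxE [RHS]mxE.
suff rows : forall rho sig, PhiM a b f1' rho sig = PhiM a b f2' rho sig.
  by congr pair; apply: (@PhiM_inj R q mu e a b esum ba); apply/matrixP => x y; apply: rows.
move=> rho sig.
case: (classic (dependent_row pi a b f1'' rho)) => [dep|ndep]; last exact: freeE.
case: dep => k [S [j [fS jS ->]]].
have [S0 [fS0 P0]] := CA k.
have eS := frakS_uniq _ fS fS0; subst S.
have [i [idx _ col]] := P0 j jS.
have /matrixP/(_ (didx k i) sig) := Z.
rewrite mulmxE' mx0E (bigD1 (didx k j)) //= col eqxx [X in _ + X = _]big1 ?addr0; last first.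
  move=> rho' ne.
  case: (classic (dependent_row pi a b f1'' rho')) => [dep'|ndep']; last first.
    by rewrite mxBE freeE // subrr mulr0.
  case: dep' => k' [S' [j' [fS' jS' erho]]].
  have [S0' [fS0' P0']] := CA k'.
  have eS' := frakS_uniq _ fS' fS0'; subst S'.
  have [i' [idx' _ col']] := P0' j' jS'.
  rewrite erho col'.
  case: eqP => [E|_]; last by rewrite mul0r.
  exfalso; move: ne; rewrite erho.
  have [ek ed] := didx_eq _ _ _ _ E; subst k'.
  have fS00 := frakS_uniq _ fS0 fS0'; subst S0'.
  have mem : forall x, x \in S0 -> dpos k x \in sorted_pos k S0.
    by move=> x xS; rewrite /sorted_pos mem_sort map_f // mem_enum.
  have ejj : dpos k j = dpos k j'.
    by rewrite -(nth_index 0 (mem _ jS)) -(nth_index 0 (mem _ jS')) idx idx' ed.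
  by rewrite (dpos_inj _ _ _ ejj) eqxx.
have [k2 [tu ->]] := didx_surj sig.
rewrite mxBE !(PhiM_didx) => H0.
apply/eqP; rewrite -subr_eq0; apply/eqP; rewrite -H0 mulrBr !mulrA !ea.
by [].
Qed.
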